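(* Let $1\leq n<\omega$ and let $\kappa$ be a cardinal with $\Theta_n>\kappa$. Then $\Theta_{n+1}>\kappa^+$.
   Context: For $1\leq n<\omega$, $\Theta_n$ is the least cardinal $\theta$ such that for every function $f:\theta^n\to\omega$ there is a sequence $\langle A_i\mid i<n\rangle$ of infinite subsets of $\theta$ such that $f\restriction\prod_{i<n}A_i$ is constant. (Here $\theta^n$ is the set of all $n$-tuples from $\theta$.) *)

(* Defs.v *)
(* Cardinals are represented by types (with the classical,
   choice-ful metatheory every type has a cardinality, which is a cardinal);
   cardinal comparison is via injections. *)
From Stdlib Require Import Arith List.

Definition le_card (A B : Type) : Prop :=
  exists f : A -> B, forall x y, f x = f y -> x = y.

Definition lt_card (A B : Type) : Prop := le_card A B /\ ~ le_card B A.

Definition is_succ_card (K Kp : Type) : Prop :=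
  lt_card K Kp /\ forall U : Type, lt_card K U -> le_card Kp U.

Definition infinite_set {T : Type} (A : T -> Prop) : Prop :=
  ~ exists l : list T, forall x, A x -> In x l.

Definition idx (n : nat) : Type := { i : nat | i < n }.

(* The partition property defining Theta_n, for theta = |T|:
   every f : T^n -> omega is constant on a product prod_{i<n} A_i
   of infinite subsets A_i of T.  n-tuples are functions idx n -> T. *)
Definition theta_prop (n : nat) (T : Type) : Prop :=
  forall f : (idx n -> T) -> nat,
    exists A : idx n -> (T -> Prop),
      (forall i, infinite_set (A i)) /\
      exists c : nat, forall x : idx n -> T, (forall i, A i (x i)) -> f x = c.

(* "Theta_n > |K|": Theta_n is the least cardinal with theta_prop n,
   so Theta_n > |K| means no cardinal theta <= |K| has theta_prop n
   (this also covers the case where no cardinal has the property). *)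
Definition Theta_gt (n : nat) (K : Type) : Prop :=
  forall U : Type, le_card U K -> ~ theta_prop n U.

(* Main.v *)
Require Import Defs.
From mathcomp Require ssreflect ssrfun ssrbool eqtype ssrnat seq boolp wochoice.
Module WOAux.
Import ssreflect ssrfun ssrbool eqtype ssrnat seq boolp wochoice.

Lemma WO (T : Type) : exists R : T -> T -> Prop,
  (forall x y z, R x y -> R y z -> R x z) /\
  (forall x y, R x y \/ x = y \/ R y x) /\
  (forall x, ~ R x x) /\
  (forall P : T -> Prop, (exists x, P x) -> exists m, P m /\ forall x, R x m -> ~ P x).
Proof.
have [R wo] := @well_ordering_principle {classic T}.
have minP : forall (A : {pred {classic T}}) x, x \in A -> exists z, z \in A /\ forall y, y \in A -> R z y.
  move=> A x xA; have [z [[zA zm] _]] := wo A (ex_intro _ x xA).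
  by exists z; split.
have refl : forall x, R x x.
  move=> x; have [z [zA zm]] := minP (pred1 x) x (eqxx x).
  by move: zA zm; rewrite inE => /eqP -> /(_ x); apply; rewrite inE.
have tot : forall x y, R x y \/ R y x.
  move=> x y; have [z [zA zm]] := minP (pred2 x y) x ltac:(by rewrite inE eqxx).
  move: zA; rewrite inE => /orP [] /eqP <-.
    by left; apply: zm; rewrite inE eqxx orbT.
  by right; apply: zm; rewrite inE eqxx.
have anti : forall x y, R x y -> R y x -> x = y.
  move=> x y Rxy Ryx.
  have hx : x \in pred2 x y by rewrite inE eqxx.
  have [z [[zA zm] zu]] := wo (pred2 x y) (ex_intro _ x hx).
  have ex : z = x.
    apply: zu; split; first by rewrite inE eqxx.
    by move=> w; rewrite inE => /orP [] /eqP ->.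
  have ey : z = y.
    apply: zu; split; first by rewrite inE eqxx orbT.
    by move=> w; rewrite inE => /orP [] /eqP ->.
  by rewrite -ex -ey.
have trans : forall x y z, R x y -> R y z -> R x z.
  move=> x y z Rxy Ryz.
  have [m [mA mm]] := minP [pred w | (w == x) || (w == y) || (w == z)] x ltac:(by rewrite inE eqxx).
  move: mA; rewrite inE => /orP [/orP []|] /eqP em; subst m.
  - by apply: mm; rewrite inE eqxx !orbT.
  - have Ryx : R y x by apply: mm; rewrite inE eqxx.
    by rewrite (anti _ _ Rxy Ryx).
  - have Rzy : R z y by apply: mm; rewrite inE eqxx !orbT.
    by rewrite -(anti _ _ Ryz Rzy).
exists (fun x y => R x y /\ x <> y).
split.
  move=> x y z [Rxy nxy] [Ryz nyz]; split; first exact: trans Rxy Ryz.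
  move=> exz; subst z; apply: nxy; exact: anti.
split.
  move=> x y; case: (tot x y) => H.
    by case: (pselect (x = y)) => e; [right; left|left].
  by case: (pselect (x = y)) => e; [right; left|right; right; split=> // e'; apply: e].
split; first by move=> x [].
move=> P [x Px].
have [m [mA mm]] := minP [pred w | `[< P w >]] x ltac:(by rewrite inE; apply/asboolP).
exists m; split; first by move: mA; rewrite inE => /asboolP.
move=> y [Rym nym] Py; apply: nym; apply: anti => //; apply: mm.
by rewrite inE; apply/asboolP.
Qed.
End WOAux.
From Stdlib Require Import Arith Lia List Classical ClassicalEpsilon FunctionalExtensionality ProofIrrelevance.

Lemma choose {A : Type} (P : A -> Prop) : (exists x, P x) -> {x | P x}.
Proof. apply constructive_indefinite_description. Qed.

Lemma inf_nonempty {T} (A : T -> Prop) : infinite_set A -> exists x, A x.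
Proof.
  intros H. apply NNPP. intro N. apply H. exists nil. intros x Ax. apply N. eauto.
Qed.

Lemma inf_mono {T} (A B : T -> Prop) : infinite_set A -> (forall x, A x -> B x) -> infinite_set B.
Proof.
  intros H Hs [l Hl]. apply H. exists l. eauto.
Qed.

Lemma inf_image {T K} (A : T -> Prop) (g : T -> K) :
  infinite_set A -> (forall x y, A x -> A y -> g x = g y -> x = y) ->
  infinite_set (fun k => exists x, A x /\ g x = k).
Proof.
  intros H Hinj [l Hl].
  destruct (inf_nonempty A H) as [x0 Hx0].
  apply H.
  set (pre := fun k : K =>
         match excluded_middle_informative (exists x, A x /\ g x = k) with
         | left E => proj1_sig (choose _ E)
         | right _ => x0 end).
  exists (map pre l). intros x Ax.
  assert (Hin : In (g x) l) by (apply Hl; eauto).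
  replace x with (pre (g x)). { apply in_map. exact Hin. }
  unfold pre. destruct (excluded_middle_informative _) as [E|E].
  - destruct (choose _ E) as [y [Ay Hy]]. simpl. apply Hinj; auto.
  - exfalso. apply E. eauto.
Qed.

Lemma inf_split {T} (s : T -> nat) : forall m (A : T -> Prop),
  infinite_set A -> (forall x, A x -> s x < m) ->
  exists t, infinite_set (fun x => A x /\ s x = t).
Proof.
  induction m as [|m IH]; intros A HA Hs.
  - destruct (inf_nonempty A HA) as [x Ax]. specialize (Hs x Ax). lia.
  - destruct (classic (infinite_set (fun x => A x /\ s x = m))) as [I|F].
    + eauto.
    + apply NNPP in F. destruct F as [l1 Hl1].
      destruct (IH (fun x => A x /\ s x <> m)) as [t Ht].
      * intros [l2 Hl2]. apply HA. exists (l1 ++ l2). intros x Ax.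
        apply in_or_app. destruct (Nat.eq_dec (s x) m); [left|right]; auto.
      * intros x [Ax Hx]. specialize (Hs x Ax). lia.
      * exists t. eapply inf_mono; [exact Ht|]. intros x [[Ax _] Hx]. auto.
Qed.

Lemma idx_eq {n} (a b : idx n) : proj1_sig a = proj1_sig b -> a = b.
Proof.
  destruct a as [a Ha], b as [b Hb]. simpl. intros ->. f_equal. apply proof_irrelevance.
Qed.

Lemma theta_transfer m (U V : Type) : le_card U V -> theta_prop m U -> theta_prop m V.
Proof.
  intros [i Hi] Hth f.
  destruct (Hth (fun y => f (fun k => i (y k)))) as [A [HA [c Hc]]].
  exists (fun k v => exists u, A k u /\ i u = v). split.
  - intros k. apply inf_image; auto.
  - exists c. intros x Hx.
    set (y := fun k => proj1_sig (choose _ (Hx k))).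
    assert (E : (fun k => i (y k)) = x).
    { apply functional_extensionality. intros k. unfold y.
      destruct (choose _ (Hx k)) as [u [Au Eu]]. exact Eu. }
    rewrite <- E. apply Hc. intros k. unfold y.
    destruct (choose _ (Hx k)) as [u [Au Eu]]. exact Au.
Qed.

Lemma small_col (n : nat) (K V : Type) (k0 : K) (Hth : Theta_gt n K)
  (P : V -> Prop) (s : V -> nat) (m : nat) (g : V -> K)
  (Hs : forall x, P x -> s x < m)
  (Hg : forall x y, P x -> P y -> s x = s y -> g x = g y -> x = y) :
  exists c : (idx n -> V) -> nat, forall A : idx n -> V -> Prop,
    (forall i, infinite_set (A i)) -> (forall i x, A i x -> P x) ->
    ~ exists c0, forall x, (forall i, A i (x i)) -> c x = c0.
Proof.
  assert (HK : ~ theta_prop n K).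
  { apply Hth. exists (fun x => x). auto. }
  unfold theta_prop in HK. apply not_all_ex_not in HK. destruct HK as [f0 Hf0].
  exists (fun z => f0 (fun i => g (z i))).
  intros A HA HP [c0 Hc0].
  assert (Ht : forall i, exists t, infinite_set (fun x => A i x /\ s x = t)).
  { intros i. apply (inf_split s m); auto. intros x Ax. apply Hs. eapply HP; eauto. }
  set (t := fun i => proj1_sig (choose _ (Ht i))).
  assert (Hti : forall i, infinite_set (fun x => A i x /\ s x = t i)).
  { intros i. unfold t. destruct (choose _ (Ht i)) as [ti Hi]. exact Hi. }
  apply Hf0. exists (fun i k => exists x, (A i x /\ s x = t i) /\ g x = k). split.
  - intros i. apply inf_image; auto. intros x y [Ax Sx] [Ay Sy] E.
    apply Hg; eauto; congruence.
  - exists c0. intros w Hw.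
    set (z := fun i => proj1_sig (choose _ (Hw i))).
    assert (E : (fun i => g (z i)) = w).
    { apply functional_extensionality. intros i. unfold z.
      destruct (choose _ (Hw i)) as [u [Au Eu]]. exact Eu. }
    rewrite <- E. apply Hc0. intros i. unfold z.
    destruct (choose _ (Hw i)) as [u [[Au Su] Eu]]. exact Au.
Qed.

Definition skip {n} (j : idx (S n)) (k : idx n) : idx (S n).
Proof.
  destruct k as [k Hk]. destruct (lt_dec k (proj1_sig j)).
  - exists k. lia.
  - exists (S k). lia.
Defined.

Lemma skip_val {n} (j : idx (S n)) (k : idx n) :
  proj1_sig (skip j k) = if lt_dec (proj1_sig k) (proj1_sig j) then proj1_sig k else S (proj1_sig k).
Proof. destruct k as [k Hk]. simpl. destruct (lt_dec k (proj1_sig j)); reflexivity. Qed.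

Lemma skip_neq {n} (j : idx (S n)) k : skip j k <> j.
Proof.
  intro E. apply (f_equal (@proj1_sig _ _)) in E. rewrite skip_val in E.
  destruct (lt_dec _ _); lia.
Qed.

Lemma skip_inj {n} (j : idx (S n)) k k' : skip j k = skip j k' -> k = k'.
Proof.
  intro E. apply (f_equal (@proj1_sig _ _)) in E. rewrite !skip_val in E.
  apply idx_eq. destruct (lt_dec _ _); destruct (lt_dec _ _); lia.
Qed.

Lemma skip_surj {n} (j : idx (S n)) i : i <> j -> exists k, skip j k = i.
Proof.
  intros H. destruct i as [i Hi]. destruct j as [j Hj].
  assert (i <> j) by (intro; subst; apply H; apply idx_eq; reflexivity).
  destruct (lt_dec i j).
  - assert (Hk : i < n) by lia. exists (exist _ i Hk). apply idx_eq. rewrite skip_val. simpl.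
    destruct (lt_dec i j); lia.
  - assert (Hk : i - 1 < n) by lia. exists (exist _ (i-1) Hk). apply idx_eq. rewrite skip_val. simpl.
    destruct (lt_dec (i-1) j); lia.
Qed.

Definition ins {V : Type} {n} (j : idx (S n)) (b : V) (z : idx n -> V) (i : idx (S n)) : V :=
  match excluded_middle_informative (exists k, skip j k = i) with
  | left H => z (proj1_sig (choose _ H))
  | right _ => b end.

Lemma ins_j {V n} j (b : V) (z : idx n -> V) : ins j b z j = b.
Proof.
  unfold ins. destruct (excluded_middle_informative _) as [[k Hk]|H]; auto.
  exfalso. exact (skip_neq j k Hk).
Qed.

Lemma ins_skip {V n} j (b : V) (z : idx n -> V) k : ins j b z (skip j k) = z k.
Proof.
  unfold ins. destruct (excluded_middle_informative _) as [H|H].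
  - destruct (choose _ H) as [k' Hk']. simpl. f_equal. apply (skip_inj j). exact Hk'.
  - exfalso. eauto.
Qed.

Lemma code_inj n (a b : idx (S n)) c d : c * S n + proj1_sig a = d * S n + proj1_sig b -> a = b /\ c = d.
Proof.
  destruct a as [a Ha], b as [b Hb]. simpl. intros E.
  assert (c = d).
  { destruct (lt_eq_lt_dec c d) as [[H|H]|H]; auto; exfalso; nia. }
  subst. split; auto. apply idx_eq. simpl. lia.
Qed.

Lemma lemA (n : nat) (V : Type) (D : V -> V -> Prop)
  (Htot : forall x : idx (S n) -> V, exists j, forall i, D (x i) (x j))
  (Hsmall : forall y, exists c : (idx n -> V) -> nat, forall A : idx n -> V -> Prop,
     (forall i, infinite_set (A i)) -> (forall i x, A i x -> D x y) ->
     ~ exists c0, forall x, (forall i, A i (x i)) -> c x = c0) :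
  ~ theta_prop (S n) V.
Proof.
  intros Hth.
  set (jf := fun x => proj1_sig (choose _ (Htot x))).
  assert (Hjf : forall x i, D (x i) (x (jf x))).
  { intros x. unfold jf. destruct (choose _ (Htot x)) as [j Hj]. exact Hj. }
  set (cf := fun y => proj1_sig (choose _ (Hsmall y))).
  assert (Hcf : forall y A, (forall i, infinite_set (A i)) -> (forall i x, A i x -> D x y) ->
     ~ exists c0, forall x, (forall i, A i (x i)) -> cf y x = c0).
  { intros y. unfold cf. destruct (choose _ (Hsmall y)) as [c Hc]. exact Hc. }
  destruct (Hth (fun x => cf (x (jf x)) (fun k => x (skip (jf x) k)) * S n + proj1_sig (jf x)))
    as [A [HA [c0 Hc0]]].
  assert (Hne : forall i, exists a, A i a) by (intros i; apply inf_nonempty; auto).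
  set (pk := fun i => proj1_sig (choose _ (Hne i))).
  assert (Hpk : forall i, A i (pk i)).
  { intros i. unfold pk. destruct (choose _ (Hne i)) as [a Ha]. exact Ha. }
  set (j0 := jf pk). set (beta := pk j0).
  set (c1 := cf beta (fun k => pk (skip j0 k))).
  assert (Hhom : forall x, (forall i, A i (x i)) -> jf x = j0 /\ cf (x j0) (fun k => x (skip j0 k)) = c1).
  { intros x Hx. pose proof (Hc0 x Hx) as E1. pose proof (Hc0 pk Hpk) as E2.
    rewrite <- E2 in E1. apply code_inj in E1. destruct E1 as [E1 E3].
    fold j0 in E1. rewrite E1 in E3. split; auto. }
  apply (Hcf beta (fun k => A (skip j0 k))).
  - intros k. apply HA.
  - intros k a Ha.
    set (x := fun i => match excluded_middle_informative (i = skip j0 k) with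
                       | left _ => a | right _ => pk i end).
    assert (Hx : forall i, A i (x i)).
    { intros i. unfold x. destruct (excluded_middle_informative _); subst; auto. }
    destruct (Hhom x Hx) as [Hj _].
    pose proof (Hjf x (skip j0 k)) as HD. rewrite Hj in HD.
    unfold x in HD. destruct (excluded_middle_informative _) as [_|C]; [|congruence].
    destruct (excluded_middle_informative _) as [C|_]; [exfalso; apply (skip_neq j0 k); auto|].
    exact HD.
  - exists c1. intros z Hz.
    set (x := ins j0 beta z).
    assert (Hx : forall i, A i (x i)).
    { intros i. unfold x. destruct (classic (i = j0)) as [->|N].
      - rewrite ins_j. apply Hpk.
      - destruct (skip_surj j0 i N) as [k <-]. rewrite ins_skip. apply Hz. }
    destruct (Hhom x Hx) as [_ Hc].
    unfold x in Hc. rewrite ins_j in Hc.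
    replace z with (fun k => ins j0 beta z (skip j0 k)). exact Hc.
    apply functional_extensionality. intros k. apply ins_skip.
Qed.

Lemma max_tuple (n : nat) (V : Type) (D : V -> V -> Prop)
  (Dtot : forall a b, D a b \/ D b a) (Dtr : forall a b c, D a b -> D b c -> D a c) :
  forall x : idx (S n) -> V, exists j, forall i, D (x i) (x j).
Proof.
  intros x.
  assert (G : forall m, m <= S n -> exists j : idx (S n), forall i, proj1_sig i < m -> D (x i) (x j)).
  { induction m as [|m IH]; intros Hm.
    - exists (exist _ 0 (Nat.lt_0_succ n)). intros i Hi. lia.
    - destruct (IH ltac:(lia)) as [j Hj].
      assert (Hm' : m < S n) by lia. set (im := exist (fun i => i < S n) m Hm').
      destruct (Dtot (x j) (x im)) as [H|H].
      + exists im. intros i Hi. destruct (Nat.eq_dec (proj1_sig i) m) as [E|E].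
        * replace i with im by (apply idx_eq; simpl; auto).
          destruct (Dtot (x im) (x im)); auto.
        * apply Dtr with (x j); auto. apply Hj. lia.
      + exists j. intros i Hi. destruct (Nat.eq_dec (proj1_sig i) m) as [E|E].
        * replace i with im by (apply idx_eq; simpl; auto). exact H.
        * apply Hj. lia. }
  destruct (G (S n) (le_n _)) as [j Hj]. exists j. intros i. apply Hj. destruct i; simpl; lia.
Qed.

Lemma lemB n (K U : Type) (k0 : K) (Hth : Theta_gt n K) (R : U -> U -> Prop)
  (Rtr : forall x y z, R x y -> R y z -> R x z) (Rtri : forall x y, R x y \/ x = y \/ R y x)
  (Sg : U -> Prop) (HS : forall x, Sg x -> le_card {y | R y x} K)
  (HU : le_card U ({x | Sg x} + K)) : ~ theta_prop (S n) U.
Proof.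
  intros Htp. apply (theta_transfer _ _ _ HU) in Htp. revert Htp.
  set (D := fun a b : ({x | Sg x} + K)%type => match a, b with
    | inr _, _ => True
    | inl _, inr _ => False
    | inl x, inl y => R (proj1_sig x) (proj1_sig y) \/ proj1_sig x = proj1_sig y end).
  apply (lemA n _ D).
  - apply max_tuple.
    + intros [x|k] [y|l]; simpl; auto.
      destruct (Rtri (proj1_sig x) (proj1_sig y)) as [H|[H|H]]; auto.
    + intros [x|k] [y|l] [z|m]; simpl; try tauto.
      intros [H1|H1] [H2|H2]; [left; eauto | left; congruence | left; congruence | right; congruence].
  - intros [u|k].
    + destruct (HS (proj1_sig u) (proj2_sig u)) as [h Hh].
      set (s := fun a : ({x | Sg x} + K)%type => match a with
        | inr _ => 0
        | inl x => if excluded_middle_informative (R (proj1_sig x) (proj1_sig u)) then 1 else 2 end).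
      set (g := fun a : ({x | Sg x} + K)%type => match a with
        | inr k => k
        | inl x => match excluded_middle_informative (R (proj1_sig x) (proj1_sig u)) with
                   | left H => h (exist _ (proj1_sig x) H) | right _ => k0 end end).
      apply (small_col n K _ k0 Hth (fun a => D a (inl u)) s 3 g).
      * intros [x|k]; simpl; [destruct (excluded_middle_informative _)|]; lia.
      * intros [x|k] [y|l]; simpl; intros Px Py; try discriminate.
        -- destruct (excluded_middle_informative (R (proj1_sig x) (proj1_sig u))) as [Hx|Hx];
           destruct (excluded_middle_informative (R (proj1_sig y) (proj1_sig u))) as [Hy|Hy];
           try discriminate; intros _ E.
           ++ apply Hh in E. injection E. intros E'. f_equal.
              destruct x, y; simpl in *; subst; f_equal; apply proof_irrelevance.
           ++ f_equal. destruct Px as [Px|Px]; [tauto|]. destruct Py as [Py|Py]; [tauto|].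
              destruct x, y; simpl in *; subst; f_equal; apply proof_irrelevance.
        -- destruct (excluded_middle_informative _); discriminate.
        -- destruct (excluded_middle_informative _); discriminate.
        -- intros _ E. congruence.
    + apply (small_col n K _ k0 Hth (fun a => D a (inr k)) (fun _ => 0) 1
        (fun a => match a with inr k => k | inl _ => k0 end)).
      * intros; lia.
      * intros [x|k1] [y|l]; simpl; intros Px Py; try tauto. intros _ E. congruence.
Qed.

Theorem proposition5p2 (n : nat) (K Kplus : Type) :
  1 <= n ->
  is_succ_card K Kplus ->
  Theta_gt n K ->
  Theta_gt (S n) Kplus.
Proof.
  intros Hn [Hlt Hmin] Hth U [iU HiU] Htp.
  destruct (classic (exists k : K, True)) as [[k0 _]|NK].
  - destruct (WOAux.WO U) as [R [Rtr [Rtri [Rirr Rmin]]]].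
    destruct (classic (exists b, ~ le_card {y | R y b} K)) as [Ex|NEx].
    + destruct (Rmin _ Ex) as [b [Hb Hbm]].
      apply (lemB n K U k0 Hth R Rtr Rtri (fun x => R x b)).
      * intros x Hx. apply NNPP. apply Hbm. exact Hx.
      * destruct (Hmin ({y | R y b} + K)%type) as [h Hh].
        { split.
          - exists inr. intros x y E. injection E. auto.
          - intros [h Hh]. apply Hb. exists (fun y => h (inl y)). intros x y E.
            apply Hh in E. injection E. auto. }
        exists (fun u => h (iU u)). intros x y E. apply HiU. apply Hh. exact E.
      * exact Htp.
    + apply (lemB n K U k0 Hth R Rtr Rtri (fun _ => True)).
      * intros x _. apply NNPP. intro C. apply NEx. eauto.
      * exists (fun u => inl (exist _ u I)). intros x y E. injection E. auto.
      * exact Htp.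
  - assert (Hu : le_card Kplus unit).
    { apply Hmin. split.
      - exists (fun _ => tt). intros x. exfalso. apply NK. eauto.
      - intros [h _]. apply NK. exists (h tt). auto. }
    destruct Hu as [j Hj].
    destruct (Htp (fun _ => 0)) as [A [HA _]].
    set (i0 := exist (fun i => i < S n) 0 (Nat.lt_0_succ n)).
    destruct (inf_nonempty _ (HA i0)) as [a Ha].
    apply (HA i0). exists (a :: nil). intros x Hx. left.
    apply HiU. apply Hj. destruct (j (iU a)), (j (iU x)). reflexivity.
Qed.
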